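(* Let $\mu$ be a nonatomic positive Radon measure on $\mathbb{R}$ and let $g\in\Lambda_\mu$ with seminorm $M$. For $a<b$ let $g_{ab}(x)=\frac{b-x}{b-a}g(a)+\frac{x-a}{b-a}g(b)$. Then $\sup_{x\in[a,b]}|g(x)-g_{ab}(x)|\le M\mu([a,b])$ for all $a<b$. Conversely, if a continuous $g$ satisfies $\sup_{[a,b]}|g-g_{ab}|\le M\mu([a,b])$ for all $a<b$, then $g\in\Lambda_\mu$ with seminorm at most $2M$.
   Context: For a nonatomic positive Radon measure $\mu$ on $\mathbb{R}$, $\Lambda_\mu$ is the class of continuous $g\colon\mathbb{R}\to\mathbb{R}$ for which there is $M>0$ with $|g(x+h)-2g(x)+g(x-h)|\le M\mu([x-h,x+h])$ for all $x\in\mathbb{R}$, $h\ge0$; the smallest such $M$ is the seminorm of $g$ in $\Lambda_\mu$. *)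

(* Defs.v *)
From Stdlib Require Import Reals.
Open Scope R_scope.

Definition Icc (a b : R) : R -> Prop := fun y => a <= y <= b.

(* A positive Radon (= locally finite Borel) measure on R, presented by a
   sigma-algebra [meas] containing all closed intervals (hence all Borel
   sets) and a set function [mu].  Since a Radon measure on R may be
   infinite on unbounded sets, [mu] is only constrained on bounded
   measurable sets (which determine the measure); its values elsewhere are
   irrelevant. *)
Definition bounded_set (A : R -> Prop) : Prop :=
  exists c, forall y, A y -> Rabs y <= c.

Record radon_measure := {
  meas : (R -> Prop) -> Prop;
  mu : (R -> Prop) -> R;
  meas_Icc : forall a b, meas (Icc a b);
  meas_compl : forall A, meas A -> meas (fun y => ~ A y);
  meas_cunion : forall A : nat -> R -> Prop,
      (forall n, meas (A n)) -> meas (fun y => exists n, A n y);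
  mu_nonneg : forall A, meas A -> bounded_set A -> 0 <= mu A;
  mu_sigma_additive : forall A : nat -> R -> Prop,
      (forall n, meas (A n)) ->
      (forall n m y, n <> m -> A n y -> A m y -> False) ->
      bounded_set (fun y => exists n, A n y) ->
      infinite_sum (fun n => mu (A n)) (mu (fun y => exists n, A n y))
}.

Definition nonatomic (m : radon_measure) : Prop :=
  forall x, mu m (fun y => y = x) = 0.

Definition Lambda_bound (m : radon_measure) (g : R -> R) (M : R) : Prop :=
  forall x h, 0 <= h ->
    Rabs (g (x + h) - 2 * g x + g (x - h)) <= M * mu m (Icc (x - h) (x + h)).

Definition in_Lambda (m : radon_measure) (g : R -> R) : Prop :=
  continuity g /\ exists M, 0 < M /\ Lambda_bound m g M.

Definition is_seminorm (m : radon_measure) (g : R -> R) (S : R) : Prop :=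
  (forall M, 0 < M -> Lambda_bound m g M -> S <= M) /\
  (forall s, (forall M, 0 < M -> Lambda_bound m g M -> s <= M) -> s <= S).

Definition g_ab (g : R -> R) (a b x : R) : R :=
  (b - x) / (b - a) * g a + (x - a) / (b - a) * g b.

(* Main.v *)
Require Import Defs.
From Stdlib Require Import Reals Lra Lia FunctionalExtensionality PropExtensionality Classical.
Open Scope R_scope.

Lemma set_ext (A B : R -> Prop) : (forall y, A y <-> B y) -> A = B.
Proof. intros H; apply functional_extensionality; intro y; apply propositional_extensionality; auto. Qed.

Lemma sum_const e n : sum_f_R0 (fun _ => e) n = INR (S n) * e.
Proof.
  induction n as [|n IH]; simpl sum_f_R0.
  - simpl; ring.
  - rewrite IH, (S_INR (S n)); ring.
Qed.

Lemma infsum_const_zero e : infinite_sum (fun _ => e) e -> e = 0.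
Proof.
  intros H. destruct (Req_dec e 0) as [|He]; auto.
  destruct (H (Rabs e)) as [N HN]. apply Rabs_pos_lt; auto.
  specialize (HN (S N) (le_S _ _ (le_n N))). unfold R_dist in HN.
  rewrite sum_const in HN.
  replace (INR (S (S N)) * e - e) with (INR (S N) * e) in HN by (rewrite (S_INR (S N)); ring).
  rewrite Rabs_mult, (Rabs_right (INR (S N))) in HN by (apply Rle_ge, pos_INR).
  assert (1 <= INR (S N)) by (apply (le_INR 1); lia).
  assert (0 < Rabs e) by (apply Rabs_pos_lt; auto). nra.
Qed.

Lemma infsum_eventually f l c : infinite_sum f l ->
  (forall n, (1 <= n)%nat -> sum_f_R0 f n = c) -> l = c.
Proof.
  intros H Hc. destruct (Req_dec l c) as [|Hn]; auto.
  destruct (H (Rabs (l - c))) as [N HN]. apply Rabs_pos_lt; lra.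
  specialize (HN (Nat.max N 1) (Nat.le_max_l _ _)).
  rewrite Hc in HN by lia. unfold R_dist in HN. rewrite Rabs_minus_sym in HN. lra.
Qed.

Lemma mu_empty m : mu m (Icc 1 0) = 0.
Proof.
  pose proof (mu_sigma_additive m (fun _ => Icc 1 0) (fun _ => meas_Icc m 1 0)) as H.
  assert (E : (fun y => exists n : nat, Icc 1 0 y) = Icc 1 0).
  { apply set_ext; intro y; split; [intros [_ h]; exact h | intro h; exists O; exact h]. }
  simpl in H. rewrite E in H. apply infsum_const_zero. apply H.
  - intros n k y _ h. cbv beta in h; unfold Icc in h. lra.
  - exists 0; intros y h; unfold Icc in h; lra.
Qed.

Lemma mu_Icc_nonneg m a b : 0 <= mu m (Icc a b).
Proof.
  apply mu_nonneg. apply meas_Icc. exists (Rabs a + Rabs b). intros y [h1 h2].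
  unfold Rabs; repeat destruct Rcase_abs; lra.
Qed.

Lemma mu_Icc_mono m a b c d : a <= c -> d <= b -> mu m (Icc c d) <= mu m (Icc a b).
Proof.
  intros Hac Hdb.
  set (X := Icc c d). set (Y := fun y => Icc a b y /\ ~ Icc c d y).
  assert (MY : meas m Y).
  { set (B := fun n : nat => match n with O => (fun y => ~ Icc a b y) | _ => Icc c d end).
    assert (EY : Y = fun y => ~ (exists n, B n y)).
    { apply set_ext; intro y; unfold Y, B; split.
      - intros [h1 h2] [[|n] hn]; auto.
      - intro h; split.
        + apply NNPP; intro h'; apply h; exists O; exact h'.
        + intro h'; apply h; exists 1%nat; exact h'. }
    rewrite EY. apply meas_compl, meas_cunion. intros [|n]; simpl.
    apply meas_compl, meas_Icc. apply meas_Icc. }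
  assert (PY : 0 <= mu m Y).
  { apply mu_nonneg; auto. exists (Rabs a + Rabs b). intros y [[h1 h2] _].
    unfold Rabs; repeat destruct Rcase_abs; lra. }
  set (A := fun n : nat => match n with O => X | 1%nat => Y | _ => Icc 1 0 end).
  pose proof (mu_sigma_additive m A) as H.
  assert (EU : (fun y => exists n, A n y) = Icc a b).
  { apply set_ext; intro y; split.
    - intros [[|[|n]] hn]; simpl in hn.
      + unfold X, Icc in *; lra.
      + destruct hn; auto.
      + unfold Icc in hn; lra.
    - intro h. destruct (classic (Icc c d y)) as [h'|h'].
      + exists O; exact h'.
      + exists 1%nat; split; auto. }
  rewrite EU in H.
  assert (Hs : mu m (Icc a b) = mu m X + mu m Y).
  { apply (infsum_eventually (fun n => mu m (A n))).
    - apply H.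
      + intros [|[|n]]; simpl; auto; apply meas_Icc.
      + intros [|[|n]] [|[|k]] y Hnk h1 h2; simpl in *; try congruence;
        unfold Y, X, Icc in *; try tauto; lra.
      + exists (Rabs a + Rabs b). intros y [h1 h2].
        unfold Rabs; repeat destruct Rcase_abs; lra.
    - intros n Hn. induction n as [|n IH]; [lia|].
      destruct n as [|n]; [simpl; ring|].
      simpl sum_f_R0 in *. rewrite IH by lia. simpl. rewrite mu_empty. ring. }
  lra.
Qed.

Lemma seminorm_nonneg m g M : is_seminorm m g M -> 0 <= M.
Proof. intros [_ H2]. apply H2. intros M' H _. lra. Qed.

Lemma key m g M' a b : continuity g -> 0 < M' -> Lambda_bound m g M' -> a < b ->
  forall x, a <= x <= b -> Rabs (g x - g_ab g a b x) <= M' * mu m (Icc a b).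
Proof.
  intros Hc HM HL Hab.
  set (h := fun x => g x - g_ab g a b x).
  assert (Hhc : continuity h).
  { set (c := (g b - g a)/(b-a)). set (d := (b*g a - a*g b)/(b-a)).
    assert (Eh : h = fun x => g x - (c * x + d)).
    { apply functional_extensionality; intro x; unfold h, g_ab, c, d; field; lra. }
    rewrite Eh.
    change (continuity (minus_fct g (plus_fct (mult_real_fct c id) (fct_cte d)))).
    apply continuity_minus; auto. apply continuity_plus.
    apply continuity_scal, derivable_continuous, derivable_id. apply continuity_const; intros u v; reflexivity. }
  assert (ha : h a = 0). { unfold h, g_ab. field. lra. }
  assert (hb : h b = 0). { unfold h, g_ab. field. lra. }
  assert (Hdiff : forall x t, h (x + t) - 2 * h x + h (x - t) = g (x + t) - 2 * g x + g (x - t)).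
  { intros x t; unfold h, g_ab. field. lra. }
  assert (Pmu := mu_Icc_nonneg m a b).
  assert (Gen : forall k : R -> R, continuity k -> k a = 0 -> k b = 0 ->
     (forall x t, Rabs (k (x + t) - 2 * k x + k (x - t)) = Rabs (g (x + t) - 2 * g x + g (x - t))) ->
     forall x, a <= x <= b -> k x <= M' * mu m (Icc a b)).
  { intros k Hk ka kb Hkd x Hx.
    destruct (continuity_ab_maj k a b (Rlt_le _ _ Hab) (fun c _ => Hk c)) as [x0 [Hmax Hx0]].
    apply Rle_trans with (k x0); [apply Hmax; auto|].
    destruct (Rle_dec (k x0) 0) as [Hle|Hgt]. { assert (0 <= M' * mu m (Icc a b)) by nra. lra. }
    assert (a < x0 < b).
    { split; destruct (Req_dec x0 a); destruct (Req_dec x0 b); subst; try lra. }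
    assert (Bnd : forall t, 0 <= t -> a <= x0 - t -> x0 + t <= b ->
      k x0 <= M' * mu m (Icc a b) \/ True) by auto.
    clear Bnd.
    destruct (Rle_dec (x0 - a) (b - x0)).
    - set (t := x0 - a).
      assert (Ht := HL x0 t ltac:(unfold t; lra)).
      rewrite <- Hkd in Ht.
      replace (x0 - t) with a in Ht by (unfold t; ring). rewrite ka in Ht.
      assert (k (x0 + t) <= k x0) by (apply Hmax; unfold t; lra).
      assert (mu m (Icc a (x0 + t)) <= mu m (Icc a b)) by (apply mu_Icc_mono; unfold t; lra).
      assert (Habs: k x0 <= Rabs (k (x0 + t) - 2 * k x0 + 0)).
      { rewrite <- Rabs_Ropp. apply Rle_trans with (- (k (x0 + t) - 2 * k x0 + 0)); [lra| apply Rle_abs]. }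
      nra.
    - set (t := b - x0).
      assert (Ht := HL x0 t ltac:(unfold t; lra)).
      rewrite <- Hkd in Ht.
      replace (x0 + t) with b in Ht by (unfold t; ring). rewrite kb in Ht.
      assert (k (x0 - t) <= k x0) by (apply Hmax; unfold t; lra).
      assert (mu m (Icc (x0 - t) b) <= mu m (Icc a b)) by (apply mu_Icc_mono; unfold t; lra).
      assert (Habs: k x0 <= Rabs (0 - 2 * k x0 + k (x0 - t))).
      { rewrite <- Rabs_Ropp. apply Rle_trans with (- (0 - 2 * k x0 + k (x0 - t))); [lra| apply Rle_abs]. }
      nra. }
  intros x Hx. fold (h x).
  assert (U := Gen h Hhc ha hb ltac:(intros; rewrite Hdiff; auto) x Hx).
  assert (L := Gen (fun y => - h y) ltac:(apply continuity_opp; auto)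
     ltac:(cbv beta; rewrite ha; ring) ltac:(cbv beta; rewrite hb; ring)
     ltac:(intros u t; cbv beta; rewrite <- Hdiff, <- Rabs_Ropp; f_equal; ring) x Hx).
  unfold Rabs; destruct Rcase_abs; lra.
Qed.

Theorem mainTheorem12 (m : radon_measure) (Hna : nonatomic m) :
  (forall (g : R -> R) (M : R),
      in_Lambda m g -> is_seminorm m g M ->
      forall a b, a < b -> forall x, a <= x <= b ->
        Rabs (g x - g_ab g a b x) <= M * mu m (Icc a b)) /\
  (forall (g : R -> R) (M : R),
      0 <= M -> continuity g ->
      (forall a b, a < b -> forall x, a <= x <= b ->
        Rabs (g x - g_ab g a b x) <= M * mu m (Icc a b)) ->
      in_Lambda m g /\ (forall S, is_seminorm m g S -> S <= 2 * M)).
Proof.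
  split.
  - intros g M [Hc [M0 [HM0 HL0]]] Hs a b Hab x Hx.
    assert (Pmu := mu_Icc_nonneg m a b).
    assert (K : forall M', 0 < M' -> Lambda_bound m g M' ->
              Rabs (g x - g_ab g a b x) <= M' * mu m (Icc a b))
      by (intros; apply key; auto).
    destruct (Req_dec (mu m (Icc a b)) 0) as [Z|NZ].
    + specialize (K M0 HM0 HL0). rewrite Z in K |- *. lra.
    + assert (P : 0 < mu m (Icc a b)) by lra.
      destruct Hs as [_ Hs2].
      assert (Rabs (g x - g_ab g a b x) / mu m (Icc a b) <= M).
      { apply Hs2. intros M' H1 H2. specialize (K M' H1 H2).
        apply (Rmult_le_reg_r (mu m (Icc a b))); auto. unfold Rdiv.
        rewrite Rmult_assoc, Rinv_l by lra. lra. }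
      apply (Rmult_le_reg_r (/ mu m (Icc a b))). apply Rinv_0_lt_compat; auto.
      rewrite Rmult_assoc, Rinv_r by lra. lra.
  - intros g M HM Hc Hb.
    assert (LB : forall e, 0 < e -> Lambda_bound m g (2 * M + e)).
    { intros e He x t Ht. assert (Pmu := mu_Icc_nonneg m (x - t) (x + t)).
      destruct (Req_dec t 0) as [Z|NZ].
      - subst t. replace (x + 0) with x by ring. replace (x - 0) with x by ring.
        replace (g x - 2 * g x + g x) with 0 by ring. rewrite Rabs_R0. apply Rmult_le_pos; [lra|apply mu_Icc_nonneg].
      - assert (B := Hb (x - t) (x + t) ltac:(lra) x ltac:(lra)).
        replace (g (x + t) - 2 * g x + g (x - t)) with ((-2) * (g x - g_ab g (x - t) (x + t) x))
          by (unfold g_ab; field; lra).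
        rewrite Rabs_mult.
        assert (Rabs (-2) = 2) by (rewrite Rabs_left; lra).
        assert (0 <= Rabs (g x - g_ab g (x - t) (x + t) x)) by apply Rabs_pos.
        nra. }
    split.
    + split; auto. exists (2 * M + 1); split; [lra | apply LB; lra].
    + intros S [H1 _]. apply Rnot_lt_le; intro HS.
      assert (HH := H1 (2 * M + (S - 2 * M) / 2) ltac:(lra) (LB ((S - 2 * M) / 2) ltac:(lra))). lra.
Qed.
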